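(* Let $\mathbb{F}_q$ be a finite field, $S\subseteq\mathbb{F}_q\setminus\{0\}$ symmetric, $G=\Gamma(\mathbb{F}_q,S)$ and $\overline{G}$ its complement. Then $\overline{G}=\Gamma(\mathbb{F}_q,\overline{S})$ with $\overline{S}=(\mathbb{F}_q\setminus\{0\})\setminus S$, and \[\Theta_{\mathrm{lin}}(G)\cdot\Theta_{\mathrm{lin}}(\overline{G})\le q.\]
   Context: For a symmetric set $S\subseteq\mathbb{F}_q\setminus\{0\}$ ($S=-S$), the Cayley graph $\Gamma(\mathbb{F}_q,S)$ has vertex set $\mathbb{F}_q$, with $u\sim v$ iff $u-v\in S$. $G^k$ is the $k$-fold strong product (distinct vertices adjacent iff in each coordinate they are equal or adjacent). $\alpha_{\mathrm{lin}}(G^k)$ is the largest size of an independent set of $G^k$ that is a linear subspace of $\mathbb{F}_q^k$, and $\Theta_{\mathrm{lin}}(G)=\sup_k\alpha_{\mathrm{lin}}(G^k)^{1/k}$. *)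

(* Defs.v *)
From HB Require Import structures.
From mathcomp Require Import all_boot all_order all_algebra all_field.
From mathcomp Require Import all_classical all_reals all_analysis.
Set Implicit Arguments. Unset Strict Implicit. Unset Printing Implicit Defensive.
Import Order.TTheory GRing.Theory Num.Theory.
Local Open Scope ring_scope.

Definition cayley (F : finFieldType) (S : {set F}) : rel F :=
  fun u v => (u - v) \in S.

Definition compl_graph (T : eqType) (e : rel T) : rel T :=
  fun u v => (u != v) && ~~ e u v.

Definition strong_pow (F : finFieldType) (e : rel F) (k : nat) : rel 'rV[F]_k :=
  fun u v => (u != v) && [forall i, (u 0 i == v 0 i) || e (u 0 i) (v 0 i)].

Definition independent (T : finType) (e : rel T) (A : {set T}) : bool :=
  [forall u in A, forall v in A, ~~ e u v].

Definition is_subspace (F : finFieldType) (k : nat) (A : {set 'rV[F]_k}) : bool :=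
  (0 \in A) && [forall u in A, forall v in A, forall a : F, a *: u + v \in A].

Definition alpha_lin (F : finFieldType) (e : rel F) (k : nat) : nat :=
  \max_(A : {set 'rV[F]_k} | @is_subspace F k A && independent (@strong_pow F e k) A) #|A|.

Definition Theta_lin (R : realType) (F : finFieldType) (e : rel F) : R :=
  sup [set x : R | exists k : nat, (0 < k)%N /\
         x = powR ((@alpha_lin F e k)%:R) (k%:R^-1)]%classic.

(* Main.v *)
Require Import Defs.
From HB Require Import structures.
From mathcomp Require Import all_boot all_order all_algebra all_field all_fingroup all_solvable.
From mathcomp Require Import all_classical all_reals all_analysis.
Import Order.TTheory GRing.Theory Num.Theory FinRing.Theory.
Set Implicit Arguments. Unset Strict Implicit. Unset Printing Implicit Defensive.
Local Open Scope ring_scope.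


Lemma cardF0 (F : finFieldType) : (#|F|%:R : F) = 0.
Proof.
pose e := exponent [set: F].
have He: e%:R == 0 :> F by rewrite -zmodXgE expg_exponent // inE.
have /dvdnP [m Hm] : (e %| #|[set: F]|)%N by apply: exponent_dvdn.
by rewrite -cardsT Hm natrM (eqP He) mulr0.
Qed.

Lemma sum_pow0 (F : finFieldType) (e : nat) : (e < #|F|.-1)%N ->
  \sum_(t : F) t ^+ e = 0.
Proof.
move=> He; case: e He => [|e] He.
  by under eq_bigr do rewrite expr0; rewrite sumr_const cardF0 ?mulr0n // -cardT.
have [a a0 ae] : exists2 a : F, a != 0 & a ^+ e.+1 != 1.
  apply/exists_inP; rewrite -negb_forall_in; apply/negP => /forall_inP H.
  pose p : {poly F} := 'X^(e.+1) - 1%:P.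
  have: (size [seq x <- enum F | x != 0%R] < size p)%N.
    apply: max_poly_roots.
    - by rewrite -size_poly_eq0 size_XnsubC.
    - apply/allP => x; rewrite mem_filter => /andP [x0 _].
      by rewrite /root !hornerE subr_eq0 (H x x0).
    - by rewrite filter_uniq // enum_uniq.
  rewrite size_XnsubC // size_filter.
  have -> : count (fun x : F => x != 0) (enum F) = #|F|.-1.
    rewrite -(cardsC1 (0:F)) cardE size_filter /enum_mem count_filter.
    by apply: eq_count => x; rewrite !inE andbT.
  by rewrite ltnNge He.
have Hs : \sum_(t : F) t ^+ e.+1 = a ^+ e.+1 * \sum_(t : F) t ^+ e.+1.
  rewrite big_distrr /= (reindex_inj (mulfI a0)) /=.
  by apply: eq_bigr => t _; rewrite exprMn.
apply/eqP; move: Hs => /eqP; rewrite -subr_eq0 -{1}[\sum_t _]mul1r -mulrBl mulf_eq0.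
by rewrite subr_eq0 eq_sym (negbTE ae).
Qed.

Section Low.
Variable F : finFieldType.
Variable d : nat.
Definition mono (e : {ffun 'I_d -> nat}) (y : 'rV[F]_d) : F := \prod_j y 0 j ^+ e j.
Definition degm (e : {ffun 'I_d -> nat}) : nat := (\sum_j e j)%N.
Definition lowdeg n (h : 'rV[F]_d -> F) :=
  exists s : seq ({ffun 'I_d -> nat} * F),
    all (fun p => degm p.1 <= n)%N s /\ forall y, h y = \sum_(p <- s) p.2 * mono p.1 y.

Lemma sum_mono e : (degm e < d * #|F|.-1)%N -> \sum_y mono e y = 0.
Proof.
move=> He.
have bij : bijective (fun f : {ffun 'I_d -> F} => \row_j f j).
  exists (fun y : 'rV[F]_d => [ffun j => y 0 j]).
    by move=> f; apply/ffunP => j; rewrite ffunE mxE.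
  by move=> y; apply/rowP => j; rewrite mxE ffunE.
rewrite (reindex _ (onW_bij _ bij)) /=.
rewrite /mono.
under eq_bigr do under eq_bigr do rewrite mxE.
rewrite -(bigA_distr_bigA (fun j t => t ^+ e j)) /=.
have [j Hj] : exists j, (e j < #|F|.-1)%N.
  case: (boolP [exists j, (e j < #|F|.-1)%N]) => [/existsP//|].
  rewrite negb_exists => /forallP H; exfalso.
  move: He; rewrite /degm ltnNge => /negP; apply.
  rewrite -{1}[d](card_ord d) -sum_nat_const.
  by apply: leq_sum => i _; rewrite leqNgt H.
by rewrite (bigD1 j) //= sum_pow0 // mul0r.
Qed.

Lemma lowdeg_sum0 n h : lowdeg n h -> (n < d * #|F|.-1)%N -> \sum_y h y = 0.
Proof.
move=> [s [Hs Hh]] Hn.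
under eq_bigr do rewrite Hh.
rewrite exchange_big /= big1_seq // => p /andP [_ ps].
rewrite -big_distrr /= sum_mono ?mulr0 //.
by apply: leq_ltn_trans Hn; move/allP: Hs; apply.
Qed.

Lemma lowdeg_le n m h : (n <= m)%N -> lowdeg n h -> lowdeg m h.
Proof.
move=> nm [s [Hs Hh]]; exists s; split => //.
by apply/allP => p ps; apply: leq_trans nm; move/allP: Hs; apply.
Qed.

Lemma lowdeg_const c : lowdeg 0 (fun _ => c).
Proof.
exists [:: ([ffun _ => 0%N], c)]; split.
  by rewrite /= andbT /degm big1 // => j _; rewrite ffunE.
by move=> y; rewrite big_seq1 /= /mono big1 ?mulr1 // => j _; rewrite ffunE expr0.
Qed.

Lemma lowdeg_coord j : lowdeg 1 (fun y => y 0 j).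
Proof.
exists [:: ([ffun i => (i == j) : nat], 1)]; split.
  rewrite /= andbT /degm (bigD1 j) //= big1 ?ffunE ?eqxx //.
  by move=> i /negbTE ij; rewrite ffunE ij.
move=> y; rewrite big_seq1 /= mul1r /mono (bigD1 j) //= big1 ?ffunE ?eqxx ?mulr1 //.
by move=> i /negbTE ij; rewrite ffunE ij expr0.
Qed.

Lemma lowdeg_add n h g : lowdeg n h -> lowdeg n g -> lowdeg n (fun y => h y + g y).
Proof.
move=> [s [Hs Hh]] [t [Ht Hg]]; exists (s ++ t); split.
  by rewrite all_cat Hs Ht.
by move=> y; rewrite big_cat Hh Hg.
Qed.

Lemma lowdeg_mul n m h g : lowdeg n h -> lowdeg m g -> lowdeg (n + m) (fun y => h y * g y).
Proof.
move=> [s [Hs Hh]] [t [Ht Hg]].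
exists [seq ([ffun j => p.1 j + q.1 j]%N, p.2 * q.2) | p : {ffun 'I_d -> nat} * F <- s, q : {ffun 'I_d -> nat} * F <- t]; split.
  apply/allP => x /allpairsP [[p q] [ps qt ->]] /=.
  rewrite /degm (eq_bigr (fun j => p.1 j + q.1 j)%N) ?big_split /=;
    last by move=> j _; rewrite ffunE.
  apply: leq_add; [by move/allP: Hs; apply | by move/allP: Ht; apply].
move=> y; rewrite Hh Hg big_distrl /= big_allpairs_dep /=.
apply: eq_bigr => p _; rewrite big_distrr /=; apply: eq_bigr => q _.
rewrite /mono -!mulrA; congr (_ * _); rewrite mulrCA; congr (_ * _).
rewrite -big_split /=; apply: eq_bigr => j _; by rewrite ffunE exprD.
Qed.

Lemma lowdeg_zero n : lowdeg n (fun _ => 0).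
Proof. by exists [::]; split => // y; rewrite big_nil. Qed.

Lemma lowdeg_bigsum (I : finType) n (G : I -> 'rV[F]_d -> F) :
  (forall i, lowdeg n (G i)) -> lowdeg n (fun y => \sum_i G i y).
Proof.
move=> HG; elim: (index_enum I) => [|i r IH].
  by exists [::]; split => // y; rewrite !big_nil.
have [s [Hs Hh]] := lowdeg_add (HG i) IH; exists s; split => // y.
by rewrite big_cons -Hh.
Qed.

Lemma lowdeg_bigprod (I : finType) (A : {pred I}) n (G : I -> 'rV[F]_d -> F) :
  (forall i, lowdeg n (G i)) -> lowdeg (#|A| * n) (fun y => \prod_(i in A) G i y).
Proof.
move=> HG.
have L : forall r : seq I, lowdeg (size r * n) (fun y => \prod_(i <- r) G i y).
  elim => [|i r IH].
    have [s [Hs Hh]] := lowdeg_const 1; exists s; split => // y.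
    by rewrite big_nil -Hh.
  have [s [Hs Hh]] := lowdeg_mul (HG i) IH.
  exists s; split; first by rewrite /= mulSn.
  by move=> y; rewrite big_cons -Hh.
have [s [Hs Hh]] := L (enum A); exists s; split; first by rewrite cardE.
by move=> y; rewrite -big_enum Hh.
Qed.

End Low.

Lemma lowdeg_ext (F : finFieldType) d n (h g : 'rV[F]_d -> F) :
  (forall y, h y = g y) -> lowdeg n g -> lowdeg n h.
Proof. by move=> E [s [Hs Hg]]; exists s; split => // y; rewrite E Hg. Qed.

Lemma dim_bound (F : finFieldType) k (A : {set 'rV[F]_k}) (T : {set F}) :
  0 \notin T -> is_subspace A ->
  (forall a, a \in A -> a != 0 -> exists i, a 0 i \in T) ->
  exists dd, #|A| = (#|F| ^ dd)%N /\ (dd * #|F|.-1 <= k * #|T|)%N.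
Proof.
move=> T0 /andP [A0 /forall_inP HA] HT.
have Hlin u v a : u \in A -> v \in A -> a *: u + v \in A.
  by move=> uA vA; move: (HA u uA) => /forall_inP /(_ v vA) /forallP.
have Hadd u v : u \in A -> v \in A -> u + v \in A.
  by move=> uA vA; rewrite -[u]scale1r Hlin.
have Hsc u a : u \in A -> a *: u \in A.
  by move=> uA; rewrite -[_ *: _]addr0 Hlin.
pose M : 'M[F]_(#|A|, k) := \matrix_(i < #|A|) (enum_val i : 'rV_k).
have HM z : z *m M \in A.
  rewrite mulmx_sum_row; apply: (big_ind (fun x => x \in A)) => //.
  by move=> i _; rewrite rowK Hsc // enum_valP.
pose B := row_base M.
pose phi := fun y : 'rV[F]_(\rank M) => y *m B.
have phi_in y : phi y \in A.
  have : (phi y <= M)%MS by rewrite /phi -(eq_row_base M) submxMl.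
  by case/submxP => z ->.
have phiA : A = phi @: [set: 'rV[F]_(\rank M)].
  apply/setP => a; apply/idP/imsetP.
    move=> aA.
    have : (a <= B)%MS.
      rewrite eq_row_base.
      have -> : a = row (enum_rank_in aA a) M by rewrite rowK enum_rankK_in.
      exact: row_sub.
    by case/submxP => y ->; exists y; rewrite ?inE.
  by case=> y _ ->.
have phi_inj : injective phi by apply: row_free_inj; exact: row_base_free.
exists (\rank M); split.
  transitivity #|phi @: [set: 'rV[F]_(\rank M)]|; first by rewrite -phiA.
  by rewrite card_imset // cardsT card_mx mul1n.
rewrite leqNgt; apply/negP => Hlt.
pose h y := \prod_(i in [set: 'I_k]) \prod_(t in T) (1 - (phi y) 0 i / t).
have Hl : lowdeg (#|[set: 'I_k]| * (#|T| * 1)) h.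
  apply: lowdeg_bigprod => i; apply: lowdeg_bigprod => t.
  apply: (@lowdeg_ext _ _ _ _
     (fun y => 1 + \sum_j (- (B j i / t)) * y 0 j)).
    move=> y; rewrite /phi mulmx_sum_row summxE big_distrl /= -sumrN.
    congr (_ + _); apply: eq_bigr => j _.
    by rewrite mxE mxE mulNr -mulrA mulrC.
  have L1 := lowdeg_le (isT : (0 <= 1)%N) (@lowdeg_const F (\rank M) 1).
  have L2 : lowdeg 1 (fun y : 'rV[F]_(\rank M) => \sum_j - (B j i / t) * y 0 j).
    apply: lowdeg_bigsum => j0.
    exact: (lowdeg_mul (@lowdeg_const F _ _) (@lowdeg_coord F _ j0)).
  exact (lowdeg_add L1 L2).
have := lowdeg_sum0 Hl; rewrite cardsT card_ord muln1.
move=> /(_ Hlt); rewrite (bigD1 0) //= big1.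
  rewrite addr0 /h big1; first by move/eqP; rewrite oner_eq0.
  move=> i _; by rewrite big1 // => t _; rewrite /phi mul0mx mxE mul0r subr0.
move=> y y0; rewrite /h.
have py0 : phi y != 0.
  by apply: contra y0 => /eqP; rewrite -(mul0mx _ B) => /phi_inj ->.
have [i Hi] := HT _ (phi_in y) py0.
have pi0 : phi y 0 i != 0 by apply: contraNneq T0 => <-.
by rewrite (bigD1 i) ?inE //= (bigD1 (phi y 0 i)) //= divff // subrr !mul0r.
Qed.


Lemma alpha_bound (F : finFieldType) (e : rel F) (T : {set F}) k :
  0 \notin T ->
  (forall u : 'rV[F]_k, u != 0 -> ~~ @strong_pow F e k u 0 -> exists i, u 0 i \in T) ->
  exists dd, alpha_lin e k = (#|F| ^ dd)%N /\ (dd * #|F|.-1 <= k * #|T|)%N.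
Proof.
move=> T0 HT.
pose P := [pred X : {set 'rV[F]_k} | is_subspace X && independent (@strong_pow F e k) X].
have P0 : P [set (0 : 'rV[F]_k)]%SET.
  rewrite /P /= /is_subspace /independent finset.in_set1 eqxx /=; apply/andP; split.
    apply/forall_inP => u; rewrite finset.in_set1 => /eqP ->.
    apply/forall_inP => v; rewrite finset.in_set1 => /eqP ->.
    by apply/forallP => a; rewrite scaler0 addr0 finset.in_set1.
  apply/forall_inP => u; rewrite finset.in_set1 => /eqP ->.
  apply/forall_inP => v; rewrite finset.in_set1 => /eqP ->.
  by rewrite /strong_pow eqxx.
have cP : (0 < #|P|)%N by apply/card_gt0P; exists [set (0:'rV[F]_k)]%SET.
have [A PA HA] := @eq_bigmax_cond _ P (fun X => #|X|) cP.
rewrite /alpha_lin HA.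
move: PA; rewrite /P /= => /andP [sA iA].
have A0 : 0 \in A by case/andP: sA.
apply: dim_bound T0 sA _ => a aA a0; apply: (HT a a0).
by move/forall_inP: iA => /(_ a aA) /forall_inP /(_ 0 A0).
Qed.

Lemma theta_bound (R : realType) (F : finFieldType) (e : rel F) (m : nat) :
  (forall k, exists dd, alpha_lin e k = (#|F| ^ dd)%N /\ (dd * #|F|.-1 <= k * m)%N) ->
  0 <= Theta_lin R e /\ Theta_lin R e <= powR (#|F|%:R : R) (m%:R / (#|F|.-1)%:R).
Proof.
move=> H.
have q1 : (1 < #|F|)%N := finNzRing_gt1 F.
have q10 : (0 < #|F|.-1)%N by rewrite -ltnS prednK // ltnW.
pose E := [set x : R | exists k : nat, (0 < k)%N /\
         x = powR ((@alpha_lin F e k)%:R) (k%:R^-1)]%classic.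
have Ub : ubound E (powR (#|F|%:R : R) (m%:R / (#|F|.-1)%:R)).
  move=> x [k [k0 ->]].
  have [dd [Ha Hd]] := H k.
  rewrite Ha natrX -powR_mulrn ?ler0n // -powRrM.
  have q1R : (1 <= #|F|%:R :> R) by rewrite ler1n ltnW.
  apply: (ler_powR q1R).
  rewrite ler_pdivlMr ?ltr0n // mulrAC ler_pdivrMr ?ltr0n //.
  by rewrite -!natrM ler_nat (mulnC m k).
have En : (E !=set0)%classic.
  by exists (powR ((@alpha_lin F e 1)%:R) (1%:R^-1)); exists 1%N.
split; last exact: ge_sup.
apply: (@le_trans _ _ (powR ((@alpha_lin F e 1)%:R) (1%:R^-1))).
  exact: powR_ge0.
apply: ub_le_sup; first by exists (powR (#|F|%:R : R) (m%:R / (#|F|.-1)%:R)).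
by exists 1%N.
Qed.

Theorem mainTheorem3 (R : realType) (F : finFieldType) (S : {set F})
  (S0 : 0 \notin S) (Ssym : forall x, x \in S -> - x \in S) :
  (forall u v : F, compl_graph (cayley S) u v =
                   cayley ([set x : F | x != 0] :\: S) u v) /\
  Theta_lin R (cayley S) * Theta_lin R (compl_graph (cayley S)) <= (#|F|%:R : R).

Proof.
have part1 : forall u v : F, compl_graph (cayley S) u v =
                   cayley ([set x : F | x != 0] :\: S) u v.
  by move=> u v; rewrite /compl_graph /cayley !finset.inE subr_eq0 andbC.
split => //.
set N := [set x : F | x != 0] :\: S.
have q1 : (1 < #|F|)%N := finNzRing_gt1 F.
have cN : (#|N| + #|S| = #|F|.-1)%N.
  have -> : #|S| = #|[set x : F | x != 0] :&: S|.
    apply: eq_card => x; rewrite !finset.inE andb_idl //.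
    by apply: contraTneq => ->.
  rewrite addnC cardsID.
  rewrite -(cardsC1 (0:F)); apply: eq_card => x; by rewrite !finset.inE.
have N0 : 0 \notin N by rewrite /N !finset.inE eqxx andbF.
have HG k : forall u : 'rV[F]_k, u != 0 -> ~~ @strong_pow F (cayley S) k u 0 ->
    exists i, u 0 i \in N.
  move=> u u0; rewrite /strong_pow u0 /= negb_forall => /existsP [i].
  rewrite negb_or => /andP [ui ci]; exists i; move: ui ci.
  rewrite /cayley !mxE subr0 /N !finset.inE => -> ->. done.
have HGb k : forall u : 'rV[F]_k, u != 0 ->
    ~~ @strong_pow F (compl_graph (cayley S)) k u 0 -> exists i, u 0 i \in S.
  move=> u u0; rewrite /strong_pow u0 /= negb_forall => /existsP [i].
  rewrite negb_or => /andP [ui ci]; exists i; move: ui ci.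
  rewrite /compl_graph /cayley !mxE subr0 => ->. by rewrite /= negbK.
have [G0 G1] := @theta_bound R F (cayley S) #|N| (fun k => @alpha_bound F _ N k N0 (HG k)).
have [H0 H1] := @theta_bound R F (compl_graph (cayley S)) #|S| (fun k => @alpha_bound F _ S k S0 (HGb k)).
apply: le_trans (ler_pM G0 H0 G1 H1) _.
have qn0 : (#|F|%:R : R) != 0 by rewrite pnatr_eq0 -lt0n ltnW.
have q10 : (#|F|.-1%:R : R) != 0 by rewrite pnatr_eq0 -lt0n -ltnS prednK // ltnW.
rewrite -powRD; last by apply/implyP => _.
by rewrite -mulrDl -natrD cN divff // powRr1 // ler0n.
Qed.
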